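(* Let $k\ge4$ be an integer and $\eta\in[\pi/k,\eta_k)$. If $\arg z_{2k-3}\in(0,\eta]$, then $z_{2k-2}\in\triangle(0,z_0,1)$, $z_{2k-1}\in\triangle(0,z_1,z_0)$, $w_{2k-2}\in\triangle(1,w_0,a)$ and $w_{2k-1}\in\triangle(1,w_1,w_0)$. If $\arg z_{2k-3}\in(\eta,2\eta]$, then $z_{2k-2}\in\triangle(0,1,z_{2k-3})$, $z_{2k-1}\in\triangle(0,z_0,1)$, $w_{2k-2}\in\triangle(1,a,w_{2k-3})$ and $w_{2k-1}\in\triangle(1,w_0,a)$.
   Context: For $\eta\in(0,\pi/3)$ let $a=\frac{e^{-i\eta}}{2\cos\eta}$, $c=\frac{1}{1-|a|^4}$, and for integers $j\ge0$ put $z_j=ca^{j+1}$, $w_j=1-c|a|^2a^j$. $\arg$ takes values in $[0,2\pi)$ (under the hypotheses $\arg z_{2k-3}=2\pi-(2k-2)\eta\in(0,2\eta]$). For integers $k\ge1$ let $\Phi_k(\eta)=(1-|a|^4)\sin((k-1)\eta)-|a|^3\sin((k-2)\eta)+|a|^k\sin\eta$; for each $k\ge4$, $\Phi_k$ has a unique zero in $(\pi/k,\pi/(k-1))$, denoted $\eta_k$. $\triangle(u,v,w)$ is the closed solid triangle with vertices $u,v,w$. *)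

(* Defs.v *)
From Stdlib Require Import Reals Lra.
From Coquelicot Require Import Coquelicot.
Open Scope R_scope.

Definition cis (t : R) : C := (cos t, sin t).

Definition a_of (eta : R) : C := (cis (- eta) / RtoC (2 * cos eta))%C.

Definition c_of (eta : R) : R := 1 / (1 - Cmod (a_of eta) ^ 4).

Definition z_of (eta : R) (j : nat) : C :=
  (RtoC (c_of eta) * Cpow (a_of eta) (S j))%C.

Definition w_of (eta : R) (j : nat) : C :=
  (RtoC 1 - RtoC (c_of eta * Cmod (a_of eta) ^ 2) * Cpow (a_of eta) j)%C.

Definition Phi (k : nat) (eta : R) : R :=
  let r := Cmod (a_of eta) in
  (1 - r ^ 4) * sin ((INR k - 1) * eta) - r ^ 3 * sin ((INR k - 2) * eta)
  + r ^ k * sin eta.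

Definition is_arg (z : C) (theta : R) : Prop :=
  z <> RtoC 0 /\ 0 <= theta < 2 * PI /\ z = (RtoC (Cmod z) * cis theta)%C.

Definition in_triangle (p u v w : C) : Prop :=
  exists l1 l2 l3 : R, 0 <= l1 /\ 0 <= l2 /\ 0 <= l3 /\ l1 + l2 + l3 = 1 /\
    p = (RtoC l1 * u + RtoC l2 * v + RtoC l3 * w)%C.

(* Main.v *)
Require Import Defs.
From Stdlib Require Import Reals.
From Coquelicot Require Import Coquelicot.
From Stdlib Require Import Lra Lia.
Open Scope R_scope.

Definition pol (m t : R) : C := (m * cos t, m * sin t).
Definition cross (x y : C) : R := fst x * snd y - snd x * fst y.

Lemma cross_pol m1 a1 m2 a2 : cross (pol m1 a1) (pol m2 a2) = m1 * m2 * sin (a2 - a1).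
Proof. unfold cross, pol; simpl. rewrite sin_minus. ring. Qed.

Lemma pol_ang m a1 a2 : a1 = a2 -> pol m a1 = pol m a2.
Proof. intros ->; reflexivity. Qed.

Lemma pol_mult m1 a1 m2 a2 : (pol m1 a1 * pol m2 a2)%C = pol (m1 * m2) (a1 + a2).
Proof.
  unfold pol, Cmult; simpl. rewrite cos_plus, sin_plus.
  apply injective_projections; simpl; ring.
Qed.

Lemma RtoC_pol m m2 a : (RtoC m * pol m2 a)%C = pol (m * m2) a.
Proof. unfold pol, Cmult, RtoC; simpl. apply injective_projections; simpl; ring. Qed.

Lemma Cpow_pol m t n : Cpow (pol m t) n = pol (m ^ n) (INR n * t).
Proof.
  induction n as [|n IH].
  - simpl. unfold pol. rewrite Rmult_0_l, cos_0, sin_0.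
    apply injective_projections; simpl; ring.
  - simpl Cpow. rewrite IH, pol_mult. apply f_equal2.
    + simpl; ring.
    + rewrite S_INR; ring.
Qed.

Lemma sc1 x : sin x ^ 2 + cos x ^ 2 = 1.
Proof. rewrite <- !Rsqr_pow2; apply sin2_cos2. Qed.

Lemma Cmod_pol m t : 0 <= m -> Cmod (pol m t) = m.
Proof.
  intros Hm. unfold Cmod, pol; cbn [fst snd].
  replace ((m * cos t) ^ 2 + (m * sin t) ^ 2) with (m ^ 2 * (sin t ^ 2 + cos t ^ 2)) by ring.
  rewrite sc1, Rmult_1_r. apply sqrt_pow2; auto.
Qed.

Lemma a_pol eta : cos eta <> 0 -> a_of eta = pol (1 / (2 * cos eta)) (- eta).
Proof.
  intros H. unfold a_of, cis, pol, Cdiv, Cmult, Cinv, RtoC; simpl.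
  rewrite cos_neg, sin_neg.
  apply injective_projections; simpl; field; auto.
Qed.

Lemma Cmod_a eta : 0 < cos eta -> Cmod (a_of eta) = 1 / (2 * cos eta).
Proof.
  intros H. rewrite a_pol by lra. apply Cmod_pol.
  apply Rlt_le, Rdiv_lt_0_compat; lra.
Qed.

Lemma zpol eta j : 0 < cos eta ->
  z_of eta j = pol (c_of eta * (1 / (2 * cos eta)) ^ S j) (INR (S j) * - eta).
Proof.
  intros H. unfold z_of. rewrite a_pol by lra. rewrite Cpow_pol, RtoC_pol. reflexivity.
Qed.

Lemma wpol eta j : 0 < cos eta ->
  w_of eta j = (RtoC 1 - pol (c_of eta * (1 / (2 * cos eta)) ^ 2 * (1 / (2 * cos eta)) ^ j) (INR j * - eta))%C.
Proof.
  intros H. unfold w_of. rewrite Cmod_a by lra. rewrite a_pol by lra.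
  rewrite Cpow_pol, RtoC_pol. reflexivity.
Qed.

Lemma c_val eta : 0 < cos eta -> c_of eta = 1 / (1 - (1 / (2 * cos eta)) ^ 4).
Proof. intros H. unfold c_of. rewrite Cmod_a by lra. reflexivity. Qed.

Lemma tri0 (p v w : C) : 0 < cross v w -> 0 <= cross p w -> 0 <= cross v p ->
  cross p w + cross v p <= cross v w -> in_triangle p (RtoC 0) v w.
Proof.
  intros HD H2 H3 H4.
  exists (1 - cross p w / cross v w - cross v p / cross v w), (cross p w / cross v w), (cross v p / cross v w).
  split; [|split; [|split; [|split]]].
  - assert ((cross p w + cross v p) / cross v w <= 1).
    { apply (Rmult_le_reg_r (cross v w)); auto. field_simplify; lra. }
    unfold Rdiv in *. lra.
  - apply Rdiv_le_0_compat; lra.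
  - apply Rdiv_le_0_compat; lra.
  - ring.
  - destruct p as [px py], v as [vx vy], w as [wx wy].
    unfold cross in *; simpl in *.
    unfold Cplus, Cmult, RtoC; simpl.
    apply injective_projections; simpl; field; lra.
Qed.

Lemma tri1 (P V W : C) : 0 < cross V W -> 0 <= cross P W -> 0 <= cross V P ->
  cross P W + cross V P <= cross V W ->
  in_triangle (RtoC 1 - P) (RtoC 1) (RtoC 1 - V) (RtoC 1 - W).
Proof.
  intros HD H2 H3 H4.
  exists (1 - cross P W / cross V W - cross V P / cross V W), (cross P W / cross V W), (cross V P / cross V W).
  split; [|split; [|split; [|split]]].
  - assert ((cross P W + cross V P) / cross V W <= 1).
    { apply (Rmult_le_reg_r (cross V W)); auto. field_simplify; lra. }
    unfold Rdiv in *. lra.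
  - apply Rdiv_le_0_compat; lra.
  - apply Rdiv_le_0_compat; lra.
  - ring.
  - destruct P as [px py], V as [vx vy], W as [wx wy].
    unfold cross in *; simpl in *.
    unfold Cminus, Copp, Cplus, Cmult, RtoC; simpl.
    apply injective_projections; simpl; field; lra.
Qed.

Lemma Phi4_eq x : 0 < cos x ->
  Phi 4 x * (16 * cos x ^ 4) = sin x * (4 * cos x ^ 2 - 1) * (16 * cos x ^ 4 - 2).
Proof.
  intros H. unfold Phi. rewrite Cmod_a by lra.
  replace ((INR 4 - 1) * x) with (x + (x + x)) by (simpl; ring).
  replace ((INR 4 - 2) * x) with (x + x) by (simpl; ring).
  rewrite sin_plus, cos_plus, !sin_plus.
  assert (E : sin x ^ 2 = 1 - cos x ^ 2) by (pose proof (sc1 x); lra).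
  field_simplify; [|lra].
  replace (sin x ^ 3) with (sin x * sin x ^ 2) by ring.
  rewrite E. field.
Qed.

Lemma pow_le1 x n : 0 <= x <= 1 -> x ^ n <= 1.
Proof. intros H. induction n; simpl; nra. Qed.

Lemma pow_pos' x n : 0 < x -> 0 < x ^ n.
Proof. intros; apply pow_lt; auto. Qed.

Lemma poly6 r : 0 < r -> r^4 <= 1/2 -> r^6 * (1 - r^4) + r^7 <= 1 - r^4.
Proof.
intros H0 H1.
assert (Hy4 : (r^3)^4 <= 1/8).
{ replace ((r^3)^4) with ((r^4)^3) by ring.
  assert (0 <= r^4) by (apply pow_le; lra).
  replace (1/8) with ((1/2)^3) by field. apply pow_incr; lra. }
assert (Hy : r^3 <= 0.6).
{ destruct (Rle_or_lt (r^3) 0.6); auto.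
  assert (0.6^4 <= (r^3)^4) by (apply pow_incr; lra). lra. }
assert (0 < r^3) by (apply pow_lt; lra).
assert (0 <= r^4) by (apply pow_le; lra).
assert (0 <= (1 - r^4)*(1 - r^3*r^3) - r^4*r^3) by nra.
replace (r^6) with (r^3*r^3) by ring. replace (r^7) with (r^4*r^3) by ring. nra.
Qed.

Lemma pt_eq m1 m2 a1 b g th : m1 = m2 -> a1 = b + g -> cos b = cos th -> sin b = sin th ->
  pol m1 a1 = pol m2 (th + g).
Proof. intros -> -> Hc Hs. unfold pol. rewrite !cos_plus, !sin_plus, Hc, Hs. reflexivity. Qed.

Lemma one_pol : RtoC 1 = pol 1 0.
Proof. unfold pol, RtoC. rewrite cos_0, sin_0. apply injective_projections; simpl; ring. Qed.

Ltac fixsin e t := repeat match goal with |- context [sin ?x] =>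
  first [ progress replace x with e by ring | progress replace x with t by ring
        | progress replace x with (e - t) by ring | progress replace x with (t - e) by ring
        | progress replace x with (2*e - t) by ring | progress replace x with (t + e) by ring ] end.

Ltac solve_pos := first [lra | apply Rmult_lt_0_compat; solve_pos | apply Rmult_le_pos; solve_pos | apply pow_lt; solve_pos | apply pow_le; solve_pos].

Theorem lemma6p4 (k : nat) (etak eta : R) :
  (4 <= k)%nat ->
  PI / INR k < etak < PI / (INR k - 1) ->
  Phi k etak = 0 ->
  (forall x, PI / INR k < x < PI / (INR k - 1) -> Phi k x = 0 -> x = etak) ->
  PI / INR k <= eta < etak ->
  ((exists th, is_arg (z_of eta (2 * k - 3)) th /\ 0 < th <= eta) ->
     in_triangle (z_of eta (2 * k - 2)) (RtoC 0) (z_of eta 0) (RtoC 1) /\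
     in_triangle (z_of eta (2 * k - 1)) (RtoC 0) (z_of eta 1) (z_of eta 0) /\
     in_triangle (w_of eta (2 * k - 2)) (RtoC 1) (w_of eta 0) (a_of eta) /\
     in_triangle (w_of eta (2 * k - 1)) (RtoC 1) (w_of eta 1) (w_of eta 0)) /\
  ((exists th, is_arg (z_of eta (2 * k - 3)) th /\ eta < th <= 2 * eta) ->
     in_triangle (z_of eta (2 * k - 2)) (RtoC 0) (RtoC 1) (z_of eta (2 * k - 3)) /\
     in_triangle (z_of eta (2 * k - 1)) (RtoC 0) (z_of eta 0) (RtoC 1) /\
     in_triangle (w_of eta (2 * k - 2)) (RtoC 1) (a_of eta) (w_of eta (2 * k - 3)) /\
     in_triangle (w_of eta (2 * k - 1)) (RtoC 1) (w_of eta 0) (a_of eta)).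
Proof.
  intros Hk Hek HPhi _ Heta.
  destruct k as [|[|[|[|n]]]]; try lia. clear Hk.
  replace (2 * S (S (S (S n))) - 3)%nat with (2*n+5)%nat by lia.
  replace (2 * S (S (S (S n))) - 2)%nat with (S (2*n+5))%nat by lia.
  replace (2 * S (S (S (S n))) - 1)%nat with (S (S (2*n+5)))%nat by lia.
  assert (HkR : INR (S (S (S (S n)))) = INR n + 4) by (rewrite !S_INR; ring).
  rewrite HkR in Hek, Heta.
  pose proof (pos_INR n) as Hn0.
  pose proof PI_RGT_0 as HPI.
  assert (Heta0 : 0 < eta).
  { destruct Heta as [H _]. eapply Rlt_le_trans; [|exact H]. apply Rdiv_lt_0_compat; lra. }
  assert (Hek3 : etak < PI / 3).
  { destruct Hek as [_ H]. eapply Rlt_le_trans; [exact H|]. unfold Rdiv.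
    apply Rmult_le_compat_l; [lra|]. apply Rinv_le_contravar; lra. }
  assert (Heta3 : eta < PI/3) by lra.
  assert (HC : 1/2 < cos eta).
  { rewrite <- cos_PI3. apply cos_decreasing_1; lra. }
  assert (HS : 0 < sin eta) by (apply sin_gt_0; lra).
  assert (HS1 : sin eta <= 1) by (pose proof (SIN_bound eta); lra).
  set (r := 1 / (2 * cos eta)).
  assert (Hr0 : 0 < r) by (unfold r; apply Rdiv_lt_0_compat; lra).
  assert (H2rC : 2 * r * cos eta = 1) by (unfold r; field; lra).
  assert (Hr1 : r < 1) by nra.
  assert (Hcase : ((n = 0)%nat /\ PI / 4 <= eta /\ r ^ 4 < 1/2) \/
                  ((1 <= n)%nat /\ eta < PI / 4 /\ r ^ 2 < 1/2)).
  { destruct n as [|n'].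
    - left. split; [reflexivity|]. split.
      { replace (INR 0 + 4) with 4 in Heta by (simpl; ring). lra. }
      assert (Hek0 : 0 < etak) by lra.
      assert (HCk : 1/2 < cos etak) by (rewrite <- cos_PI3; apply cos_decreasing_1; lra).
      assert (HSk : 0 < sin etak) by (apply sin_gt_0; lra).
      pose proof (Phi4_eq etak ltac:(lra)) as E. rewrite HPhi, Rmult_0_l in E.
      symmetry in E. apply Rmult_integral in E.
      assert (Hk4 : 16 * cos etak ^ 4 = 2).
      { destruct E as [E|E]; [|lra].
        apply Rmult_integral in E. exfalso. destruct E as [E|E]; nra. }
      assert (HCC : cos etak < cos eta) by (apply cos_decreasing_1; lra).
      assert (HC4 : 2 < 16 * cos eta ^ 4).
      { assert (cos etak ^ 2 < cos eta ^ 2) by nra. nra. }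
      replace (r ^ 4) with (/ (16 * cos eta ^ 4)) by (unfold r; field; lra).
      replace (1/2) with (/ 2) by field.
      apply Rinv_lt_contravar; nra.
    - right. split; [lia|].
      assert (Hn1 : 1 <= INR (S n')) by (rewrite S_INR; pose proof (pos_INR n'); lra).
      assert (H4 : eta < PI / 4).
      { destruct Hek as [_ H]. eapply Rlt_le_trans; [|unfold Rdiv; apply Rmult_le_compat_l; [lra|]].
        - apply Rlt_trans with etak; [lra|exact H].
        - apply Rinv_le_contravar; lra. }
      split; [exact H4|].
      assert (HC2 : 1/sqrt 2 < cos eta) by (rewrite <- cos_PI4; apply cos_decreasing_1; lra).
      assert (Hq : (1 / sqrt 2) * (1 / sqrt 2) = 1/2).
      { assert (sqrt 2 * sqrt 2 = 2) by (apply sqrt_sqrt; lra).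
        assert (0 < sqrt 2) by (apply sqrt_lt_R0; lra). replace (1 / sqrt 2 * (1 / sqrt 2)) with (1 / (sqrt 2 * sqrt 2)) by (field; lra). rewrite H. reflexivity. }
      assert (0 < 1 / sqrt 2) by (apply Rdiv_lt_0_compat; [lra| apply sqrt_lt_R0; lra]).
      assert (1/2 < cos eta ^ 2) by nra.
      replace (r ^ 2) with (/ (4 * cos eta ^ 2)) by (unfold r; field; lra).
      replace (1/2) with (/ 2) by field.
      apply Rinv_lt_contravar; nra. }
  assert (Hr4 : r ^ 4 < 1/2) by (destruct Hcase as [[_ [_ H]]|[_ [_ H]]]; nra).

  set (c := c_of eta).
  assert (Hc : c = 1 / (1 - r^4)) by (unfold c, r; apply c_val; lra).
  assert (Hr40 : 0 < r^4) by (apply pow_lt; lra).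
  assert (Hc' : c * (1 - r^4) = 1) by (rewrite Hc; field; lra).
  assert (Hc1 : 1 <= c) by nra.
  set (j5 := (2*n+5)%nat).
  set (P := r ^ j5).
  assert (HP0 : 0 < P) by (apply pow_lt; lra).
  assert (Hrho6 : r * P <= r^6).
  { unfold P, j5. rewrite pow_add. assert (r^(2*n) <= 1) by (apply pow_le1; lra).
    assert (0 < r^5) by (apply pow_lt; lra). nra. }
  assert (Hrho8 : (1 <= n)%nat -> r * P <= r^8).
  { intros Hn. unfold P, j5. replace (2*n+5)%nat with ((2*n-2) + 7)%nat by lia.
    rewrite pow_add. assert (r^(2*n-2) <= 1) by (apply pow_le1; lra).
    assert (0 < r^7) by (apply pow_lt; lra). nra. }
  set (M := c * (r * P)).
  assert (HM0 : 0 < M) by (unfold M; solve_pos).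
  assert (HB1 : M + M * c * r <= c).
  { pose proof (poly6 r Hr0 (Rlt_le _ _ Hr4)) as Hp.
    assert (Hq : r^6 + c * r^7 <= 1).
    { assert (c * (r^6 * (1 - r^4) + r^7) <= c * (1 - r^4)) by (apply Rmult_le_compat_l; lra).
      nra. }
    assert (0 <= c * r * P) by solve_pos.
    assert (c * (r * P) * (1 + c * r) <= c * r^6 * (1 + c*r)).
    { apply Rmult_le_compat_r; [nra|]. apply Rmult_le_compat_l; lra. }
    unfold M. nra. }
  set (beta := INR (S j5) * - eta).
  assert (E_X0 : z_of eta j5 = pol M beta).
  { rewrite zpol by lra. fold r c. f_equal; try (unfold M, P; rewrite <- tech_pow_Rmult; ring). }
  assert (Harg0 : forall th, is_arg (z_of eta j5) th -> cos beta = cos th /\ sin beta = sin th).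
  { intros th [_ [_ Heq]]. rewrite E_X0 in Heq. rewrite Cmod_pol in Heq by lra.
    assert (H1 := f_equal fst Heq); assert (H2 := f_equal snd Heq).
    unfold pol, cis, RtoC, Cmult in H1, H2; simpl in H1, H2.
    split; apply (Rmult_eq_reg_l M); lra. }
  assert (E_z0 : z_of eta 0 = pol (c*r) (-eta)).
  { rewrite zpol by lra. fold r c. f_equal; simpl; ring. }
  assert (E_z1 : z_of eta 1 = pol (c*r^2) (-(2*eta))).
  { rewrite zpol by lra. fold r c. f_equal; simpl; ring. }
  assert (E_a1 : a_of eta = (RtoC 1 - pol r eta)%C).
  { rewrite a_pol by lra. fold r. unfold pol, RtoC, Cminus, Cplus, Copp.
    rewrite cos_neg, sin_neg. apply injective_projections; simpl; lra. }
  assert (E_w0 : w_of eta 0 = (RtoC 1 - pol (c*r^2) 0)%C).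
  { rewrite wpol by lra. fold r c. f_equal. f_equal; simpl; ring. }
  assert (E_w1 : w_of eta 1 = (RtoC 1 - pol (c*r^3) (-eta))%C).
  { rewrite wpol by lra. fold r c. f_equal. f_equal; simpl; ring. }
  assert (Epts : forall th, cos beta = cos th -> sin beta = sin th ->
     z_of eta j5 = pol M (th + 0) /\
     z_of eta (S j5) = pol (M*r) (th + -eta) /\
     z_of eta (S (S j5)) = pol (M*r^2) (th + -(2*eta)) /\
     w_of eta j5 = (RtoC 1 - pol (M*r) (th + eta))%C /\
     w_of eta (S j5) = (RtoC 1 - pol (M*r^2) (th + 0))%C /\
     w_of eta (S (S j5)) = (RtoC 1 - pol (M*r^3) (th + -eta))%C).
  { intros th Hcb Hsb.
    split; [|split; [|split; [|split; [|split]]]].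
    - rewrite E_X0. apply pt_eq with beta; auto; ring.
    - rewrite zpol by lra. fold r c. apply pt_eq with beta; auto.
      + unfold M, P. rewrite <- !tech_pow_Rmult. ring.
      + unfold beta. rewrite (S_INR (S j5)). ring.
    - rewrite zpol by lra. fold r c. apply pt_eq with beta; auto.
      + unfold M, P. rewrite <- !tech_pow_Rmult. ring.
      + unfold beta. rewrite (S_INR (S (S j5))), (S_INR (S j5)). ring.
    - rewrite wpol by lra. fold r c. f_equal. apply pt_eq with beta; auto.
      + unfold M, P. ring.
      + unfold beta. rewrite (S_INR j5). ring.
    - rewrite wpol by lra. fold r c. f_equal. apply pt_eq with beta; auto.
      + unfold M, P. rewrite <- !tech_pow_Rmult. ring.
      + unfold beta. ring.
    - rewrite wpol by lra. fold r c. f_equal. apply pt_eq with beta; auto.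
      + unfold M, P. rewrite <- !tech_pow_Rmult. ring.
      + unfold beta. rewrite (S_INR (S j5)). ring. }

  split.
  - intros [th [Harg Hth]]. destruct (Harg0 th Harg) as [Hcb Hsb].
    destruct (Epts th Hcb Hsb) as [E_X [E_z6 [E_z7 [E_w5 [E_w6 E_w7]]]]].
    assert (Hst : 0 < sin th) by (apply sin_gt_0; lra).
    assert (Hst2 : sin th <= sin eta) by (apply sin_incr_1; lra).
    assert (Hs1 : 0 <= sin (eta - th)) by (apply sin_ge_0; lra).
    assert (Hs1' : sin (eta - th) <= sin eta) by (apply sin_incr_1; lra).
    assert (K1 : M * sin (eta - th) + c * M * r * sin th <= c * sin eta).
    { assert (M * sin (eta-th) <= M * sin eta) by (apply Rmult_le_compat_l; lra).
      assert (c*M*r*sin th <= c*M*r*sin eta) by (apply Rmult_le_compat_l; solve_pos).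
      assert (sin eta * (M + M*c*r) <= sin eta * c) by (apply Rmult_le_compat_l; lra).
      lra. }
    assert (K1b : M * sin (eta - th) + M * r * sin th <= c * sin eta).
    { assert (0 <= (c - 1) * (M * r * sin th)) by solve_pos. lra. }
    split; [|split; [|split]].
    + rewrite E_z6, E_z0, one_pol. apply tri0; rewrite !cross_pol; fixsin eta th; try solve_pos.
      assert (0 <= r * (c * sin eta - (M * sin (eta - th) + c * M * r * sin th))) by solve_pos.
      lra.
    + rewrite E_z7, E_z1, E_z0. apply tri0; rewrite !cross_pol; fixsin eta th; try solve_pos.
      assert (0 <= c * r^3 * (c * sin eta - (M * sin (eta - th) + M * r * sin th))) by solve_pos.
      lra.
    + rewrite E_w6, E_w0, E_a1. apply tri1; rewrite !cross_pol; fixsin eta th; try solve_pos.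
      assert (0 <= r^3 * (c * sin eta - (M * sin (eta - th) + c * M * r * sin th))) by solve_pos.
      lra.
    + rewrite E_w7, E_w1, E_w0. apply tri1; rewrite !cross_pol; fixsin eta th; try solve_pos.
      assert (0 <= c * r^5 * (c * sin eta - (M * sin (eta - th) + M * r * sin th))) by solve_pos.
      lra.
  - intros [th [Harg Hth]]. destruct (Harg0 th Harg) as [Hcb Hsb].
    destruct (Epts th Hcb Hsb) as [E_X [E_z6 [E_z7 [E_w5 [E_w6 E_w7]]]]].
    assert (Hst : 0 < sin th) by (apply sin_gt_0; lra).
    assert (Hs2 : 0 <= sin (th - eta)) by (apply sin_ge_0; lra).
    assert (Hs2' : sin (th - eta) <= sin eta) by (apply sin_incr_1; lra).
    assert (Hs4 : 0 <= sin (2 * eta - th)) by (apply sin_ge_0; lra).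
    assert (Hs4' : sin (2 * eta - th) <= sin eta) by (apply sin_incr_1; lra).
    assert (Hid : sin th = r * (sin (th + eta) + sin (th - eta))).
    { rewrite sin_plus, sin_minus. unfold r. field. lra. }
    assert (HI2 : M * sin eta <= sin (th + eta)).
    { destruct Hcase as [[Hn [H4 _]] | [Hn [H4 Hr2]]].
      - assert (Hsum : sin (th + eta) = sin (5 * eta - PI)).
        { rewrite sin_plus, <- Hcb, <- Hsb, <- sin_plus.
          replace (beta + eta) with (- ((5*eta - PI) + PI)).
          + rewrite sin_neg, neg_sin. ring.
          + unfold beta, j5. rewrite Hn. simpl. ring. }
        assert (Hlow : 1 / sqrt 2 <= sin (5*eta - PI)).
        { rewrite <- sin_PI4. destruct (Rle_or_lt (5*eta - PI) (PI/2)).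
          - apply sin_incr_1; lra.
          - rewrite <- (sin_PI_x (5*eta - PI)). apply sin_incr_1; lra. }
        assert (Hq : (1 / sqrt 2) * (1 / sqrt 2) = 1/2).
        { assert (H : sqrt 2 * sqrt 2 = 2) by (apply sqrt_sqrt; lra).
          assert (0 < sqrt 2) by (apply sqrt_lt_R0; lra).
          replace (1 / sqrt 2 * (1 / sqrt 2)) with (1 / (sqrt 2 * sqrt 2)) by (field; lra).
          rewrite H. reflexivity. }
        assert (Hq0 : 0 < 1 / sqrt 2) by (apply Rdiv_lt_0_compat; [lra| apply sqrt_lt_R0; lra]).
        set (q := 1 / sqrt 2) in *.
        set (t := r^2).
        assert (Ht0 : 0 < t) by (unfold t; solve_pos).
        assert (Ht4 : r^4 = t*t) by (unfold t; ring).
        assert (Ht6 : r^6 = t*t*t) by (unfold t; ring).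
        assert (Htq : t < q) by nra.
        assert (Ht3 : t*t*t < q*q*q).
        { assert (t*t < q*q) by nra. nra. }
        assert (H6 : r^6 + q * r^4 < q) by nra.
        assert (HcM : c * r^6 < q) by nra.
        assert (HMq : M < q).
        { unfold M. assert (c * (r * P) <= c * r^6) by (apply Rmult_le_compat_l; lra). lra. }
        nra.
      - assert (HM2 : M < 1/2).
        { assert (Hr44 : r^4 < 1/4) by nra.
          assert (Hc43 : c < 4/3) by nra.
          assert (Hr8 : r^8 < 1/16).
          { replace (r^8) with ((r^2)^4) by ring. assert (0 < r^2) by solve_pos.
            assert ((r^2)^2 < 1/4) by nra. nra. }
          assert (M <= c * r^8) by (unfold M; apply Rmult_le_compat_l; [lra| apply Hrho8; lia]).
          assert (0 < r^8) by solve_pos.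
          nra. }
        assert (Hst3 : sin eta <= sin th) by (apply sin_incr_1; lra).
        assert (Hct : 0 <= cos th) by (apply cos_ge_0; lra).
        rewrite sin_plus. nra. }
    assert (K2 : M * r * sin (2 * eta - th) + c * M * r * sin (th - eta) <= c * sin eta).
    { assert (M * r * sin (2*eta-th) <= M * r * sin eta) by (apply Rmult_le_compat_l; solve_pos).
      assert (c*M*r*sin (th-eta) <= c*M*r*sin eta) by (apply Rmult_le_compat_l; solve_pos).
      assert (M * r <= M) by nra.
      assert (sin eta * (M * r + M*c*r) <= sin eta * c) by (apply Rmult_le_compat_l; lra).
      lra. }
    assert (K2d : M * r * sin (2 * eta - th) + c * M * r^2 * sin (th - eta) <= c * sin eta).
    { assert (0 <= c * M * r * (1 - r) * sin (th - eta)) by solve_pos. lra. }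
    split; [|split; [|split]].
    + rewrite E_z6, one_pol, E_X. apply tri0; rewrite !cross_pol; fixsin eta th; try solve_pos.
      rewrite Hid.
      assert (0 <= M * r * (sin (th + eta) - M * sin eta)) by solve_pos.
      lra.
    + rewrite E_z7, E_z0, one_pol. apply tri0; rewrite !cross_pol; fixsin eta th; try solve_pos.
      assert (0 <= r * (c * sin eta - (M * r * sin (2 * eta - th) + c * M * r^2 * sin (th - eta)))) by solve_pos.
      lra.
    + rewrite E_w6, E_a1, E_w5. apply tri1; rewrite !cross_pol; fixsin eta th; try solve_pos.
      rewrite Hid.
      assert (0 <= M * r^3 * (sin (th + eta) - M * sin eta)) by solve_pos.
      lra.
    + rewrite E_w7, E_w0, E_a1. apply tri1; rewrite !cross_pol; fixsin eta th; try solve_pos.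
      assert (0 <= r^3 * (c * sin eta - (M * r * sin (2 * eta - th) + c * M * r^2 * sin (th - eta)))) by solve_pos.
      lra.
Qed.
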